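(* Let $k\ge1$ and $r\ge0$ be integers, and let $\mathcal{C}$ be a multiset of $2^k+r$ non-zero residues modulo $2^{k+1}$ such that no sub-collection sums to $2^k$ modulo $2^{k+1}$, and such that for no odd $\lambda$ can $\lambda\cdot\mathcal{C}$ be type 1 compressed. Fix $i$ and a sub-multiset $\mathcal{C}_i\subseteq\mathcal{C}$ with $|\mathcal{C}_i|=i$. Choose an element $x$ of $\mathcal{C}\setminus\mathcal{C}_i$ so that, with $\mathcal{C}_{i+1}=\mathcal{C}_i\cup\{x\}$, the size $|\mathcal{C}_{i+1}^*\setminus\mathcal{C}_i^*|$ is maximal. Then $|\mathcal{C}_{i+1}^*\setminus\mathcal{C}_i^*|>2$ unless at least one of the following holds: (1) $|\mathcal{C}_i^*|\le5$ or $|\mathcal{C}_i^*|\ge2^{k+1}-5$; (2) all elements of $\mathcal{C}\setminus\mathcal{C}_i$ are even; (3) there is an odd residue $u$ such that every element of $\mathcal{C}\setminus\mathcal{C}_i$ lies in $\{u,-u,2^k-u,-(2^k-u)\}$ modulo $2^{k+1}$.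
   Context: Multisets are called collections; $\mathcal{C}\setminus\mathcal{C}_i$ is the multiset difference. For a multiset $\mathcal{D}=\{a_1,\dots,a_d\}$ of residues modulo $2^{k+1}$, $\mathcal{D}^*=\{\sum_{i\in I}a_i \bmod 2^{k+1}: I\subseteq[d]\}$ (including $0$). $\lambda\cdot\mathcal{C}=\{\lambda c:c\in\mathcal{C}\}$. For a residue $t$, $|t|$ is the minimal absolute value of an integer in its residue class. A multiset $\mathcal{D}$ can be type 1 compressed if for some $\lambda>0$ it contains at least $\lambda$ elements each equal to $\pm1$ and also an element $t$ with $1<|t|\le\lambda+1$. *)

(* Defs.v *)
From mathcomp Require Import all_boot all_order all_algebra.
Set Implicit Arguments. Unset Strict Implicit. Unset Printing Implicit Defensive.
Import GRing.Theory.
Local Open Scope ring_scope.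

(* A multiset (collection) C of residues is a sequence C : seq 'Z_n; a
   sub-collection is given by a set of positions S : {set 'I_(size C)}. *)

(* (sub-collection of C indexed by S)^* : all subset sums, including 0. *)
Definition subsums n (C : seq 'Z_n) (S : {set 'I_(size C)}) : {set 'Z_n} :=
  [set (\sum_(j in I) C`_j) | I : {set 'I_(size C)} in powerset S].

Arguments subsums {n} C S.

Definition allsums n (D : seq 'Z_n) : {set 'Z_n} := subsums D [set: 'I_(size D)].

Definition absZ n (t : 'Z_n) : nat := minn (val t) (n - val t).

Definition type1_compressible n (D : seq 'Z_n) : Prop :=
  exists lam : nat, (0 < lam)%N /\
    (lam <= count (fun x : 'Z_n => (x == 1%R) || (x == (-1)%R)) D)%N /\
    exists2 t, t \in D & (1 < absZ t)%N && (absZ t <= lam.+1)%N.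

Definition scaleC n (lam : nat) (D : seq 'Z_n) : seq 'Z_n :=
  [seq lam%:R * c | c <- D].

(* Main.v *)
Require Import Defs.
From mathcomp Require Import all_boot all_order all_algebra.
From mathcomp Require Import zify.
From Stdlib Require Import Classical.
Set Implicit Arguments. Unset Strict Implicit. Unset Printing Implicit Defensive.
Import GRing.Theory.

Definition nb (b : bool) : nat := b.
Definition per N (f : nat -> bool) := forall n, f (n + N) = f n.
Definition Dw N f w := \sum_(0 <= t < N) nb (f t && ~~ f (t + w)).
Definition Dw' N f w := \sum_(0 <= t < N) nb (~~ f t && f (t + w)).
Definition Wn f w a := \sum_(0 <= j < w) nb (f (a + j)).

Lemma sum_shift1 N (g : nat -> nat) : (forall n, g (n + N) = g n) ->
  \sum_(0 <= t < N) g t.+1 = \sum_(0 <= t < N) g t.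
Proof.
case: N => [|N] hg; first by rewrite !big_geq.
rewrite big_nat_recr //= [RHS]big_nat_recl //=.
by rewrite -{1}[N.+1]add0n hg addnC.
Qed.

Lemma sum_shift N (g : nat -> nat) c : (forall n, g (n + N) = g n) ->
  \sum_(0 <= t < N) g (t + c) = \sum_(0 <= t < N) g t.
Proof.
move=> hg; elim: c => [|c IH]; first by apply: eq_bigr => t _; rewrite addn0.
rewrite -IH -(sum_shift1 (g := fun t => g (t + c))); last by move=> n; rewrite addnAC hg.
by apply: eq_bigr => t _; rewrite addSnnS.
Qed.

Lemma nbsplit b c : nb b = nb (b && c) + nb (b && ~~ c).
Proof. by case: b; case: c. Qed.

Lemma DD' N f w : per N f -> Dw N f w = Dw' N f w.
Proof.
move=> hf.
have e1 : \sum_(0 <= t < N) nb (f t) = \sum_(0 <= t < N) nb (f t && f (t + w)) + Dw N f w.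
  by rewrite /Dw -big_split /=; apply: eq_bigr => t _; rewrite -nbsplit.
have e2 : \sum_(0 <= t < N) nb (f (t + w)) = \sum_(0 <= t < N) nb (f t && f (t + w)) + Dw' N f w.
  rewrite /Dw' -big_split /=; apply: eq_bigr => t _.
  by rewrite (nbsplit (f (t + w)) (f t)); case: (f t); case: (f (t+w)).
have e3 : \sum_(0 <= t < N) nb (f (t + w)) = \sum_(0 <= t < N) nb (f t).
  by apply: (sum_shift (g := fun t => nb (f t))) => n; rewrite hf.
by apply/eqP; rewrite -(eqn_add2l (\sum_(0 <= t < N) nb (f t && f (t + w)))) -e1 -e2 e3.
Qed.

Lemma fmul N f : per N f -> forall q n, f (n + q * N) = f n.
Proof. by move=> hf; elim=> [|q IH] n; rewrite ?mul0n ?addn0 // mulSn addnA IH hf. Qed.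

Lemma fmod N f : per N f -> forall n j, f (n %% N + j) = f (n + j).
Proof.
move=> hf n j; by rewrite [in RHS](divn_eq n N) -addnA (addnC (n %/ N * N)) (fmul hf).
Qed.

Lemma W_step f w a : Wn f w a.+1 + nb (f a) = Wn f w a + nb (f (a + w)).
Proof.
rewrite /Wn -big_nat_recr //= big_nat_recl //= addn0 addnC; congr (_ + _).
by apply: eq_bigr => j _; rewrite addSnnS.
Qed.

Lemma W_move f w a m : Wn f w a <= Wn f w (a + m) +
   \sum_(0 <= j < m) nb (f (a + j) && ~~ f (a + j + w)).
Proof.
elim: m => [|m IH]; first by rewrite addn0 big_geq // addn0.
rewrite big_nat_recr //= addnS.
have := W_step f w (a + m).
move: IH; case: (f (a + m)); case: (f (a + m + w)) => /=; lia.
Qed.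

Lemma sum_part N (P : nat -> bool) a m : per N P -> m <= N ->
  \sum_(0 <= j < m) nb (P (a + j)) <= \sum_(0 <= t < N) nb (P t).
Proof.
move=> hP hm; rewrite -(sum_shift (g := fun t => nb (P t)) a); last by move=> n; rewrite hP.
rewrite [X in _ <= X](big_cat_nat (n := m)) //=.
have -> : \sum_(0 <= j < m) nb (P (a + j)) = \sum_(0 <= t < m) nb (P (t + a)).
  by apply: eq_bigr => j _; rewrite addnC.
exact: leq_addr.
Qed.

Lemma W_le f N w a m : per N f -> m <= N -> Wn f w a <= Wn f w (a + m) + Dw N f w.
Proof.
move=> hf hm; apply: leq_trans (W_move f w a m) _; rewrite leq_add2l.
apply: (sum_part (P := fun t => f t && ~~ f (t + w))) => // n.
by rewrite hf addnAC hf.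
Qed.

Lemma W_per N f w a : per N f -> 0 < N -> Wn f w a = Wn f w (a %% N).
Proof. by move=> hf hN; apply: eq_bigr => j _; rewrite fmod. Qed.

Lemma W_le_any N f w a b : per N f -> 0 < N -> Wn f w a <= Wn f w b + Dw N f w.
Proof.
move=> hf hN; rewrite (W_per w a hf hN) (W_per w b hf hN).
have ha : a %% N < N by rewrite ltn_mod.
have hb : b %% N < N by rewrite ltn_mod.
case: (leqP (a %% N) (b %% N)) => hab.
  have -> : b %% N = a %% N + (b %% N - a %% N) by lia.
  by apply: W_le => //; lia.
have -> : Wn f w (b %% N) = Wn f w (a %% N + (b %% N + N - a %% N)).
  have -> : a %% N + (b %% N + N - a %% N) = b %% N + N by lia.
  by apply: eq_bigr => j _; rewrite addnAC hf.
by apply: W_le => //; lia.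
Qed.

Lemma caseA N f w s u : per N f -> 0 < N -> 3 <= w ->
  (forall j, j < w -> f (s + j)) -> ~~ f u -> ~~ f u.+1 -> ~~ f u.+2 ->
  3 <= Dw N f w.
Proof.
move=> hf hN hw hs h0 h1 h2.
have Ws : Wn f w s = w.
  rewrite /Wn -[w in RHS](card_ord w) -sum1_card big_mkord.
  by apply: eq_bigr => j _; rewrite hs.
have Wu : Wn f w u + 3 <= w.
  rewrite /Wn (big_cat_nat (n := 3)) //= !big_nat_recr //= big_geq //=.
  rewrite addn0 (addn1 u) (addn2 u) (negbTE h1) (negbTE h2) (negbTE h0) /=.
  have : \sum_(3 <= i < w) nb (f (u + i)) <= \sum_(3 <= i < w) 1.
    by apply: leq_sum => i _; case: (f _).
  rewrite sum_nat_const_nat; lia.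
have := W_le_any w s u hf hN; lia.
Qed.

Lemma run3 N g : per N g -> 5 <= \sum_(0 <= t < N) nb (~~ g t) ->
  Dw' N g 1 <= 2 -> exists u, [/\ ~~ g u, ~~ g u.+1 & ~~ g u.+2].
Proof.
move=> hg hK hD; apply: NNPP => hno.
have pt : forall t, nb (~~ g t) <= nb (~~ g t && g (t + 1)) + nb (~~ g (t + 1) && g (t + 1 + 1)).
  move=> t; rewrite !addn1.
  case E0: (g t); case E1: (g t.+1); case E2: (g t.+2) => //=.
  by exfalso; apply: hno; exists t; rewrite E0 E1 E2.
have : \sum_(0 <= t < N) nb (~~ g t) <= Dw' N g 1 + Dw' N g 1.
  have h1 : \sum_(0 <= t < N) nb (~~ g t) <= \sum_(0 <= t < N)
     (nb (~~ g t && g (t + 1)) + nb (~~ g (t + 1) && g (t + 1 + 1))).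
    by apply: leq_sum => t _; exact: pt.
  apply: leq_trans h1 _.
  rewrite big_split /= leq_add2l /Dw'.
  rewrite (sum_shift (g := fun t => nb (~~ g t && g (t + 1)))) // => n.
  by rewrite hg addnAC hg.
lia.
Qed.

Lemma chain (g : nat -> bool) a b : a <= b ->
  nb (g a != g b) <= \sum_(a <= j < b) nb (g j != g j.+1).
Proof.
elim: b => [|b IH]; first by rewrite leqn0 => /eqP ->; rewrite eqxx.
rewrite leq_eqVlt => /orP [/eqP ->|hab]; first by rewrite eqxx.
rewrite big_nat_recr //=; have := IH hab.
by case: (g a); case: (g b); case: (g b.+1) => /=; lia.
Qed.

Lemma caseB N f w : per N f -> 
  (forall t, exists2 i, i < w & f (t + i) != f t) ->
  2 * N <= w * (Dw N f 1 + Dw' N f 1) + (Dw N f w + Dw' N f w).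
Proof.
move=> hf hne.
pose c t := \sum_(0 <= j < w) nb (f (t + j) != f (t + j).+1).
have pt : forall t, 2 <= c t + nb (f t != f (t + w)).
  move=> t; have [i hi hfi] := hne t.
  have h1 := chain (fun j => f (t + j)) (leq0n i).
  have h2 := chain (fun j => f (t + j)) (ltnW hi).
  simpl in h1, h2.
  have -> : c t = \sum_(0 <= j < i) nb (f (t + j) != f (t + j.+1)) +
                  \sum_(i <= j < w) nb (f (t + j) != f (t + j.+1)).
    rewrite /c (big_cat_nat (n := i)) //=; last exact: ltnW.
    by congr (_ + _); apply: eq_bigr => j _; rewrite addnS.
  move: h1 h2 hfi; rewrite addn0; case: (f t); case: (f (t + i)); case: (f (t + w)) => //=; lia.
have : \sum_(0 <= t < N) 2 <= \sum_(0 <= t < N) (c t + nb (f t != f (t + w))).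
  by apply: leq_sum => t _; exact: pt.
rewrite sum_nat_const_nat big_split /= subn0 mulnC.
have -> : \sum_(0 <= t < N) c t = w * (Dw N f 1 + Dw' N f 1).
  rewrite /c exchange_big_nat /=.
  have -> : Dw N f 1 + Dw' N f 1 = \sum_(0 <= t < N) nb (f t != f t.+1).
    rewrite /Dw /Dw' -big_split /=; apply: eq_bigr => t _; rewrite addn1.
    by case: (f t); case: (f t.+1).
  rewrite -[w in w * _]subn0 -sum_nat_const_nat; apply: eq_bigr => j _.
  rewrite (sum_shift (g := fun t => nb (f t != f t.+1))) // => n.
  by rewrite hf -addSn hf.
have -> : \sum_(0 <= t < N) nb (f t != f (t + w)) = Dw N f w + Dw' N f w.
  rewrite /Dw /Dw' -big_split /=; apply: eq_bigr => t _.
  by case: (f t); case: (f (t + w)).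
done.
Qed.

Lemma core N f w : per N f -> 0 < N -> Dw N f 1 <= 2 ->
  6 <= \sum_(0 <= t < N) nb (f t) -> 6 <= \sum_(0 <= t < N) nb (~~ f t) ->
  3 <= w -> 2 * w + 3 <= N -> 3 <= Dw N f w.
Proof.
move=> hf hN hD1 hK hK' hw hwN.
have hD1' : Dw' N f 1 <= 2 by rewrite -DD'.
have hg : per N (fun n => ~~ f n) by move=> n; rewrite hf.
case: (classic (exists s, forall j, j < w -> f (s + j))) => [[s hs]|hA].
  have [|u [h0 h1 h2]] := run3 hf _ hD1'; first by apply: leq_trans hK'.
  exact: caseA hf hN hw hs h0 h1 h2.
case: (classic (exists s, forall j, j < w -> ~~ f (s + j))) => [[s hs]|hB].
  have [u [h0 h1 h2]] : exists u, [/\ ~~ ~~ f u, ~~ ~~ f u.+1 & ~~ ~~ f u.+2].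
    apply: (@run3 N (fun n => ~~ f n) hg).
    - by under eq_bigr do rewrite negbK; lia.
    - by rewrite /Dw'; under eq_bigr do rewrite negbK; exact: hD1.
  rewrite DD' //; have := caseA hg hN hw hs h0 h1 h2.
  by rewrite /Dw /Dw'; under eq_bigr do rewrite negbK.
have hne : forall t, exists2 i, i < w & f (t + i) != f t.
  move=> t; case E: (f t).
    apply: NNPP => hn; apply: hA; exists t => j hj; apply: NNPP => hj'.
    by apply: hn; exists j => //; case: (f (t + j)) hj'.
  apply: NNPP => hn; apply: hB; exists t => j hj; apply: NNPP => hj'.
  by apply: hn; exists j => //; case: (f (t + j)) hj'.
have := caseB hf hne.
rewrite -!DD' //.
have : w * Dw N f 1 <= w * 2 by rewrite leq_mul2l hD1 orbT.
lia.
Qed.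

Lemma Dsym N f w : per N f -> w <= N -> Dw N f (N - w) = Dw N f w.
Proof.
move=> hf hw; rewrite [RHS]DD' // /Dw /Dw'.
have e := sum_shift (g := fun t => nb (f t && ~~ f (t + (N - w)))) w.
cbv beta in e; rewrite -e; last by move=> n; rewrite hf addnAC hf.
apply: eq_bigr => t _.
have -> : t + w + (N - w) = t + N by lia.
by rewrite hf andbC.
Qed.

Local Open Scope ring_scope.

Lemma subsumsU1 n (C : seq 'Z_n) (S : {set 'I_(size C)}) j : j \notin S ->
  subsums C (j |: S) = subsums C S :|: [set a + C`_j | a in subsums C S].
Proof.
move=> hj; apply/setP => a; rewrite inE; apply/imsetP/orP.
- case=> I; rewrite powersetE => hI ->.
  case hjI: (j \in I).
    right; apply/imsetP; exists (\sum_(i in I :\ j) C`_i).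
      apply/imsetP; exists (I :\ j) => //; rewrite powersetE.
      apply/subsetP => x; rewrite in_setD1 => /andP [hx hxI].
      by move/subsetP: hI => /(_ x hxI); rewrite in_setU1 (negbTE hx).
    rewrite (bigD1 j) /=; last by rewrite hjI.
    rewrite addrC; congr (_ + _).
    by apply: eq_bigl => i; rewrite in_setD1 andbC.
  left; apply/imsetP; exists I => //; rewrite powersetE.
  apply/subsetP => x hxI; move/subsetP: hI => /(_ x hxI); rewrite in_setU1.
  by case/orP => // /eqP hx; rewrite hx hjI in hxI.
- case=> [/imsetP [I hI ->] | /imsetP [b /imsetP [I hI ->] ->]].
    by exists I => //; rewrite powersetE in hI; rewrite powersetE (subset_trans hI) ?subsetU1.
  rewrite powersetE in hI.
  have hjI : j \notin I by apply: contra hj; move/subsetP: hI; apply.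
  exists (j |: I); first by rewrite powersetE setUS.
  by rewrite big_setU1 //= addrC.
Qed.

Lemma gainE n (C : seq 'Z_n) (S : {set 'I_(size C)}) j : j \notin S ->
  #|subsums C (j |: S) :\: subsums C S| =
  #|[set a | (a \in subsums C S) && (a + C`_j \notin subsums C S)]|.
Proof.
move=> hj; rewrite subsumsU1 // setDUl setDv set0U.
set U := subsums C S.
have -> : [set a + C`_j | a in U] :\: U =
   (fun a => a + C`_j) @: [set a | (a \in U) && (a + C`_j \notin U)].
  apply/setP => b; rewrite !inE; apply/andP/imsetP.
    case=> hb /imsetP [a ha hba]; exists a => //.
    by rewrite inE ha -hba.
  case=> a; rewrite inE => /andP [ha hna] ->; split => //.
  by apply/imsetP; exists a.
by rewrite card_imset //; exact: addIr.
Qed.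

Lemma cntZ n (P : pred 'Z_n) (y : 'Z_n) : (1 < n)%N -> y \is a GRing.unit ->
  (\sum_(0 <= t < n) nb (P (t%:R * y)%R))%N = #|[set a | P a]|.
Proof.
move=> hn hy; rewrite -{1}(Zp_cast hn) big_mkord.
have -> : (\sum_(t < (Zp_trunc n).+2) nb (P (t%:R * y)%R) = \sum_(t : 'Z_n) nb (P (t * y)%R))%N.
  by apply: eq_bigr => t _; rewrite natr_Zp.
rewrite cardE -sum1_size big_enum big_mkcond /=.
rewrite [in RHS](reindex_inj (mulIr hy)) /=.
rewrite [RHS]big_mkcond; apply: eq_bigr => a _; rewrite inE; by case: (P _).
Qed.

Lemma Zp_predN (p : nat) : (1 < p)%N -> ((p - 1)%:R : 'Z_p) = -1.
Proof. by move=> hp; rewrite natrB ?(ltnW hp) // pchar_Zp // sub0r. Qed.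

Lemma Zp_natB1 p (n : nat) (y : 'Z_p) : (0 < n)%N -> (n - 1)%:R * y = n%:R * y - y.
Proof. by move=> hn; rewrite natrB // mulrBl mul1r. Qed.

Lemma oddUnit k (u : 'Z_(2 ^ k.+1)) : (1 <= k)%N ->
  u \is a GRing.unit = odd (val u).
Proof.
move=> hk; have hN : (1 < 2 ^ k.+1)%N by rewrite -[1%N](expn0 2) ltn_exp2l.
by rewrite -{1}(natr_Zp u) unitZpE // coprime_pexpl // coprime2n.
Qed.

Theorem lemma3p7 (k r i : nat) (C : seq 'Z_(2 ^ k.+1))
  (S : {set 'I_(size C)}) (x : 'I_(size C)) :
  (1 <= k)%N ->
  size C = (2 ^ k + r)%N ->
  (forall c, c \in C -> c != 0) ->
  (2 ^ k)%:R \notin allsums C ->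
  (forall lam : nat, odd lam -> ~ type1_compressible (scaleC lam C)) ->
  #|S| = i ->
  x \notin S ->
  (forall y : 'I_(size C), y \notin S ->
     (#|subsums C (y |: S) :\: subsums C S|
        <= #|subsums C (x |: S) :\: subsums C S|)%N) ->
  (2 < #|subsums C (x |: S) :\: subsums C S|)%N
  \/ (#|subsums C S| <= 5)%N
  \/ (2 ^ k.+1 - 5 <= #|subsums C S|)%N
  \/ (forall j : 'I_(size C), j \notin S -> ~~ odd (val C`_j))
  \/ (exists2 u : 'Z_(2 ^ k.+1), odd (val u) &
        forall j : 'I_(size C), j \notin S ->
          C`_j \in [:: u; - u; (2 ^ k)%:R - u; - ((2 ^ k)%:R - u)]).
Proof.
move=> hk hsz hnz hH hcomp hSi hx hmax.
have hN1 : (1 < 2 ^ k.+1)%N by rewrite -[1%N](expn0 2) ltn_exp2l.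
have hNH : (2 ^ k.+1 = 2 * 2 ^ k)%N by rewrite expnS.
have hH2 : (2 <= 2 ^ k)%N by rewrite -[2%N](expn1 2) leq_exp2l.
case: (leqP 3 #|subsums C (x |: S) :\: subsums C S|) => hx2; first by left.
right; case: (leqP #|subsums C S| 5) => hA5; first by left.
right; case: (leqP (2 ^ k.+1 - 5) #|subsums C S|) => hA5'; first by left.
right; case: (classic (forall j : 'I_(size C), j \notin S -> ~~ odd (val C`_j))) => hev;
  first by left.
right.
have [j0 [hj0 hy]] : exists j0 : 'I_(size C), j0 \notin S /\ odd (val C`_j0).
  apply: NNPP => hn; apply: hev => j hj; apply/negP => ho; apply: hn; by exists j.
set y := C`_j0 in hy *.
exists y => // j hj.
set A := subsums C S in hA5 hA5' hx2 hmax *.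
have hyu : y \is a GRing.unit by rewrite oddUnit.
pose f := fun n : nat => ((n%:R : 'Z_(2 ^ k.+1)) * y \in A).
have hper : per (2 ^ k.+1) f.
  by move=> n; rewrite /f natrD pchar_Zp // addr0.
have DwE : forall m, Dw (2 ^ k.+1) f m =
    #|[set a | (a \in A) && (a + (m%:R * y) \notin A)]|.
  move=> m; rewrite /Dw -(cntZ _ hN1 hyu); apply: eq_bigr => t _.
  by rewrite /f natrD mulrDl.
have gE : forall j, j \notin S -> #|subsums C (j |: S) :\: A| =
    #|[set a | (a \in A) && (a + C`_j \notin A)]|.
  by move=> j' hj'; rewrite gainE.
set z := C`_j.
have [m hmz hm] : exists2 m : nat, m%:R * y = z & (m < 2 ^ k.+1)%N.
  exists (nat_of_ord (z / y)); first by rewrite natr_Zp divrK.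
  by rewrite -[X in (_ < X)%N](Zp_cast hN1); exact: ltn_ord.
have hD : (Dw (2 ^ k.+1) f m <= 2)%N.
  by rewrite DwE hmz -gE //; apply: leq_trans (hmax j hj) _; lia.
have hD1 : (Dw (2 ^ k.+1) f 1 <= 2)%N.
  by rewrite DwE mul1r -gE //; apply: leq_trans (hmax j0 hj0) _; lia.
have hcard : (#|A| + #|~: A| = 2 ^ k.+1)%N.
  by rewrite cardsC card_ord Zp_cast.
have hK : (6 <= \sum_(0 <= t < 2 ^ k.+1) nb (f t))%N.
  have -> : (\sum_(0 <= t < 2 ^ k.+1) nb (f t) = #|[set a | a \in A]|)%N.
    by rewrite -(cntZ _ hN1 hyu).
  have -> : [set a | a \in A] = A by apply/setP => a; rewrite inE.
  lia.
have hK' : (6 <= \sum_(0 <= t < 2 ^ k.+1) nb (~~ f t))%N.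
  have -> : (\sum_(0 <= t < 2 ^ k.+1) nb (~~ f t) = #|[set a | a \notin A]|)%N.
    by rewrite -(cntZ (fun a => a \notin A) hN1 hyu).
  have -> : [set a | a \notin A] = ~: A by apply/setP => a; rewrite !inE.
  lia.
have hc1 : ~ ((3 <= m)%N /\ (2 * m + 3 <= 2 ^ k.+1)%N).
  case=> h1 h2; have := core hper _ hD1 hK hK' h1 h2; lia.
have hc2 : ~ ((3 <= 2 ^ k.+1 - m)%N /\ (2 * (2 ^ k.+1 - m) + 3 <= 2 ^ k.+1)%N).
  case=> h1 h2; have := core hper _ hD1 hK hK' h1 h2.
  rewrite Dsym //; [lia | exact: ltnW].
have hcase : (m = 0 \/ m = 1 \/ (m = 2 \/ m = 2 ^ k.+1 - 2) \/ m = 2 ^ k.+1 - 1 \/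
     m = 2 ^ k \/ m = 2 ^ k + 1 \/ m = 2 ^ k - 1)%N by lia.
have hN0 : (2 ^ k.+1)%:R = 0 :> 'Z_(2 ^ k.+1) by exact: pchar_Zp.
set h := (2 ^ k)%:R : 'Z_(2 ^ k.+1).
have hh : - h = h.
  apply/eqP; rewrite eq_sym -addr_eq0 -natrD addnn -mul2n -expnS; exact/eqP.
have hhy : h * y = h.
  have e : (2 ^ k * val y = 2 ^ k + 2 ^ k.+1 * (val y)./2)%N.
    have ev := odd_double_half (val y); rewrite hy in ev.
    move: ev; move: (val y) ((val y)./2) => v q ev.
    rewrite -ev expnS -muln2; nia.
  by rewrite -[y in h * y]natr_Zp -natrM e natrD natrM hN0 mul0r addr0.
have zC : z \in C by exact: mem_nth.
case: hcase => [h0|[h1|[h2|[h3|[h4|[h5|h6]]]]]].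
- by move: (hnz _ zC); rewrite -hmz h0 mul0r eqxx.
- by rewrite -hmz h1 mul1r inE eqxx.
- exfalso.
  pose lam := nat_of_ord (y^-1).
  have hlo : odd lam.
    have := oddUnit (y^-1) hk; rewrite unitrV hyu => e; exact: (esym e).
  apply: (hcomp lam hlo); exists 1%N; split => //; split.
    rewrite -has_count; apply/hasP; exists 1.
      have -> : (1 : 'Z_(2 ^ k.+1)) = lam%:R * y by rewrite /lam natr_Zp mulVr.
      by apply: (map_f (fun c => lam%:R * c)); exact: mem_nth.
    by rewrite eqxx.
  exists (lam%:R * z); first by apply: (map_f (fun c => lam%:R * c)).
  have -> : lam%:R * z = m%:R by rewrite -hmz mulrCA /lam natr_Zp mulVr // mulr1.
  have hv : val (m%:R : 'Z_(2 ^ k.+1)) = (m %% 2 ^ k.+1)%N := val_Zp_nat hN1 m.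
  rewrite /absZ hv.
  case: h2 => ->; rewrite modn_small; lia.
- by rewrite -hmz h3 Zp_predN // mulN1r !inE eqxx orbT.
- exfalso; move/negP: hH; apply.
  apply/imsetP; exists [set j]; first by rewrite powersetE subsetT.
  by rewrite big_set1 -/z -hmz h4 hhy.
- rewrite -hmz h5 natrD mulrDl hhy mul1r !inE opprB hh addrC eqxx.
  by rewrite !orbT.
- rewrite -hmz h6 Zp_natB1 ?expn_gt0 // -/h hhy !inE eqxx.
  by rewrite !orbT.
Qed.
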